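(* Let $F$ be a semi-safe sentence that contains no object constants. Then $\mathrm{SM}[F]$ entails $\forall\mathbf x\,\neg p_i(\mathbf x)$ for every predicate constant $p_i$ of arity $>0$ occurring in $F$ (where $\mathbf x$ is a list of distinct variables of the arity of $p_i$).
   Context: Formulas are first-order formulas over a signature with object constants, predicate constants and equality, but no function constants of arity $>0$. The primitive connectives are $\bot,\land,\lor,\rightarrow$ and the quantifiers $\forall,\exists$; $\neg F$ abbreviates $F\rightarrow\bot$, $\top$ abbreviates $\bot\rightarrow\bot$, and $F\leftrightarrow G$ abbreviates $(F\rightarrow G)\land(G\rightarrow F)$. A sentence is a formula without free variables. Stable model operator: for a sentence $F$, let $\mathbf p=p_1,\dots,p_n$ be all predicate constants occurring in $F$ and $\mathbf u=u_1,\dots,u_n$ distinct predicate variables with matching arities. $\mathbf u\le\mathbf p$ is $\bigwedge_i\forall\mathbf x(u_i(\mathbf x)\rightarrow p_i(\mathbf x))$, $\mathbf u=\mathbf p$ is $\bigwedge_i\forall\mathbf x(u_i(\mathbf x)\leftrightarrow p_i(\mathbf x))$, and $\mathbf u<\mathbf p$ is $(\mathbf u\le\mathbf p)\land\neg(\mathbf u=\mathbf p)$. $F^*(\mathbf u)$ is defined recursively: $p_i(\mathbf t)^*=u_i(\mathbf t)$; $(t_1=t_2)^*=(t_1=t_2)$; $\bot^*=\bot$; $(G\land H)^*=G^*\land H^*$; $(G\lor H)^*=G^*\lor H^*$; $(G\rightarrow H)^*=(G^*\rightarrow H^* )\land(G\rightarrow H)$; $(\forall xG)^*=\forall xG^*$;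 $(\exists xG)^*=\exists xG^*$. Then $\mathrm{SM}[F]$ is the second-order sentence $F\land\neg\exists\mathbf u((\mathbf u<\mathbf p)\land F^*(\mathbf u))$. Restricted variables: for a quantifier-free formula $F$, $\mathrm{RV}(F)$ is defined by: if $F$ is an equality between two variables, $\mathrm{RV}(F)=\emptyset$; if $F$ is any other atomic formula, $\mathrm{RV}(F)$ is the set of variables occurring in $F$; $\mathrm{RV}(\bot)=\emptyset$; $\mathrm{RV}(G\land H)=\mathrm{RV}(G)\cup\mathrm{RV}(H)$; $\mathrm{RV}(G\lor H)=\mathrm{RV}(G)\cap\mathrm{RV}(H)$; $\mathrm{RV}(G\rightarrow H)=\emptyset$. An occurrence of a subformula or variable is strictly positive if it is not in the antecedent of any implication. A sentence in prenex form $Q_1x_1\cdots Q_nx_nM$ ($M$ quantifier-free, $x_i$ distinct) is semi-safe if every strictly positive occurrence of every variable $x_i$ in $M$ belongs to a subformula $G\rightarrow H$ of $M$ with $x_i\in\mathrm{RV}(G)$. *)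

(* Defs.v *)
From Stdlib Require Import List PeanoNat Bool.
Import ListNotations.

Definition psym := (nat * nat)%type.
Definition arity (p : psym) : nat := snd p.

Inductive term := Var (x : nat) | Cst (c : nat).

(** First-order formulas use [S := psym]; the formula F*(u) uses
    [S := psym + psym], where [inl p] is the predicate constant p and
    [inr p] is the predicate variable u_p associated with p. *)
Inductive form (S : Type) : Type :=
| Atom (s : S) (ts : list term)
| Eqf (t1 t2 : term)
| Bot
| And (F G : form S)
| Or (F G : form S)
| Imp (F G : form S)
| All (x : nat) (F : form S)
| Ex (x : nat) (F : form S).
Arguments Atom {S}. Arguments Eqf {S}. Arguments Bot {S}.
Arguments And {S}. Arguments Or {S}. Arguments Imp {S}.
Arguments All {S}. Arguments Ex {S}.

Definition Neg {S} (F : form S) : form S := Imp F Bot.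

Definition forall_list {S} (xs : list nat) (F : form S) : form S :=
  fold_right All F xs.

Definition term_vars (t : term) : list nat :=
  match t with Var x => [x] | Cst _ => [] end.

Fixpoint fv {S} (F : form S) : list nat :=
  match F with
  | Atom _ ts => flat_map term_vars ts
  | Eqf t1 t2 => term_vars t1 ++ term_vars t2
  | Bot => []
  | And G H | Or G H | Imp G H => fv G ++ fv H
  | All x G | Ex x G => remove Nat.eq_dec x (fv G)
  end.

Definition sentence {S} (F : form S) : Prop := fv F = [].

Definition term_is_const (t : term) : bool :=
  match t with Cst _ => true | Var _ => false end.

Fixpoint no_obj_consts {S} (F : form S) : Prop :=
  match F with
  | Atom _ ts => forall t, In t ts -> term_is_const t = false
  | Eqf t1 t2 => term_is_const t1 = false /\ term_is_const t2 = false
  | Bot => True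
  | And G H | Or G H | Imp G H => no_obj_consts G /\ no_obj_consts H
  | All _ G | Ex _ G => no_obj_consts G
  end.

Fixpoint preds (F : form psym) : list psym :=
  match F with
  | Atom p _ => [p]
  | Eqf _ _ | Bot => []
  | And G H | Or G H | Imp G H => preds G ++ preds H
  | All _ G | Ex _ G => preds G
  end.

Fixpoint wf (F : form psym) : Prop :=
  match F with
  | Atom p ts => length ts = arity p
  | Eqf _ _ | Bot => True
  | And G H | Or G H | Imp G H => wf G /\ wf H
  | All _ G | Ex _ G => wf G
  end.

Fixpoint fmap {S T} (f : S -> T) (F : form S) : form T :=
  match F with
  | Atom s ts => Atom (f s) ts
  | Eqf t1 t2 => Eqf t1 t2
  | Bot => Bot
  | And G H => And (fmap f G) (fmap f H)
  | Or G H => Or (fmap f G) (fmap f H)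
  | Imp G H => Imp (fmap f G) (fmap f H)
  | All x G => All x (fmap f G)
  | Ex x G => Ex x (fmap f G)
  end.

Fixpoint star (F : form psym) : form (psym + psym) :=
  match F with
  | Atom p ts => Atom (inr p) ts
  | Eqf t1 t2 => Eqf t1 t2
  | Bot => Bot
  | And G H => And (star G) (star H)
  | Or G H => Or (star G) (star H)
  | Imp G H => And (Imp (star G) (star H)) (Imp (fmap inl G) (fmap inl H))
  | All x G => All x (star G)
  | Ex x G => Ex x (star G)
  end.

Definition upd {D} (rho : nat -> D) (x : nat) (d : D) : nat -> D :=
  fun y => if Nat.eqb y x then d else rho y.

Definition tval {D} (c : nat -> D) (rho : nat -> D) (t : term) : D :=
  match t with Var x => rho x | Cst k => c k end.

Fixpoint sat {S D} (c : nat -> D) (P : S -> list D -> Prop)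
  (rho : nat -> D) (F : form S) : Prop :=
  match F with
  | Atom s ts => P s (map (tval c rho) ts)
  | Eqf t1 t2 => tval c rho t1 = tval c rho t2
  | Bot => False
  | And G H => sat c P rho G /\ sat c P rho H
  | Or G H => sat c P rho G \/ sat c P rho H
  | Imp G H => sat c P rho G -> sat c P rho H
  | All x G => forall d, sat c P (upd rho x d) G
  | Ex x G => exists d, sat c P (upd rho x d) G
  end.

Definition le_on {D} (ps : list psym) (U P : psym -> list D -> Prop) : Prop :=
  forall p, In p ps -> forall xs, length xs = arity p -> U p xs -> P p xs.
Definition eq_on {D} (ps : list psym) (U P : psym -> list D -> Prop) : Prop :=
  forall p, In p ps -> forall xs, length xs = arity p -> (U p xs <-> P p xs).
Definition lt_on {D} (ps : list psym) (U P : psym -> list D -> Prop) : Prop :=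
  le_on ps U P /\ ~ eq_on ps U P.

Definition sum_interp {D} (P U : psym -> list D -> Prop) :
  psym + psym -> list D -> Prop :=
  fun s => match s with inl p => P p | inr p => U p end.

Definition sat_SM {D} (c : nat -> D) (P : psym -> list D -> Prop)
  (rho : nat -> D) (F : form psym) : Prop :=
  sat c P rho F /\
  ~ (exists U : psym -> list D -> Prop,
        lt_on (preds F) U P /\ sat c (sum_interp P U) rho (star F)).

Definition SM_entails (F G : form psym) : Prop :=
  forall (D : Type), inhabited D ->
  forall (c : nat -> D) (P : psym -> list D -> Prop) (rho : nat -> D),
    sat_SM c P rho F -> sat c P rho G.

Definition is_var (t : term) : bool :=
  match t with Var _ => true | Cst _ => false end.

Fixpoint inRV (x : nat) (F : form psym) : Prop :=
  match F with
  | Atom _ ts => In x (flat_map term_vars ts)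
  | Eqf t1 t2 =>
      if andb (is_var t1) (is_var t2) then False
      else In x (term_vars t1 ++ term_vars t2)
  | Bot => False
  | And G H => inRV x G \/ inRV x H
  | Or G H => inRV x G /\ inRV x H
  | Imp _ _ => False
  | All _ _ | Ex _ _ => False  (* not used: RV is only for quantifier-free formulas *)
  end.

Fixpoint qfree {S} (F : form S) : Prop :=
  match F with
  | Atom _ _ | Eqf _ _ | Bot => True
  | And G H | Or G H | Imp G H => qfree G /\ qfree H
  | All _ _ | Ex _ _ => False
  end.

(** [covered x M]: every strictly positive occurrence of x in M belongs to a
    subformula G -> H of M with x in RV(G). *)
Fixpoint covered (x : nat) (M : form psym) : Prop :=
  match M with
  | Atom _ ts => ~ In x (flat_map term_vars ts)
  | Eqf t1 t2 => ~ In x (term_vars t1 ++ term_vars t2)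
  | Bot => True
  | And G H | Or G H => covered x G /\ covered x H
  | Imp G H => inRV x G \/ covered x H
  | All _ G | Ex _ G => covered x G
  end.

Definition prenex (qs : list (bool * nat)) (M : form psym) : form psym :=
  fold_right (fun (q : bool * nat) (G : form psym) => if fst q then All (snd q) G else Ex (snd q) G) M qs.

Definition semi_safe (F : form psym) : Prop :=
  sentence F /\
  exists (qs : list (bool * nat)) (M : form psym),
    F = prenex qs M /\ qfree M /\ NoDup (map snd qs) /\
    forall x, In x (map snd qs) -> covered x M.

(* Main.v *)
Require Import Defs.
From Stdlib Require Import List.
From Stdlib Require Import Classical Lia PeanoNat.
Import ListNotations.

Definition Uz {D} (P : psym -> list D -> Prop) : psym -> list D -> Prop :=
  fun q l => l = [] /\ P q l.

Lemma sat_fmap_inl {D} (c : nat -> D) P U :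
  forall G rho, sat c (sum_interp P U) rho (fmap inl G) <-> sat c P rho G.
Proof. induction G; intros; simpl; firstorder. Qed.

Lemma star_imp {D} (c : nat -> D) P U (HU : forall s l, U s l -> P s l) :
  forall G rho, sat c (sum_interp P U) rho (star G) -> sat c P rho G.
Proof.
  induction G; simpl; intros rho H.
  - apply HU; exact H.
  - exact H.
  - exact H.
  - firstorder.
  - firstorder.
  - intros HG. apply (proj1 (sat_fmap_inl c P U G2 rho)).
    apply (proj2 H). apply (proj2 (sat_fmap_inl c P U G1 rho)). exact HG.
  - intros d. apply IHG. apply H.
  - destruct H as [d Hd]. exists d. apply IHG. exact Hd.
Qed.

Lemma rv_false {D} (c : nat -> D) P :
  forall G, qfree G -> no_obj_consts G -> forall x rho, inRV x G ->
  ~ sat c (sum_interp P (Uz P)) rho (star G).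
Proof.
  induction G; simpl; intros Hq Hno y rho Hin.
  - intros [Hnil _]. destruct ts; simpl in *; [contradiction | discriminate].
  - destruct Hno as [H1 H2]. destruct t1, t2; simpl in *; try discriminate; contradiction.
  - contradiction.
  - destruct Hq, Hno; destruct Hin; firstorder.
  - destruct Hq, Hno; destruct Hin; firstorder.
  - contradiction.
  - contradiction.
  - contradiction.
Qed.

Lemma qf_main {D} (c : nat -> D) P :
  forall M, qfree M -> no_obj_consts M -> forall rho,
  (forall x, In x (fv M) -> covered x M) ->
  sat c P rho M -> sat c (sum_interp P (Uz P)) rho (star M).
Proof.
  induction M as [| | | M1 IHM1 M2 IHM2 | M1 IHM1 M2 IHM2 | M1 IHM1 M2 IHM2 | z M IHM | z M IHM]; simpl; intros Hq Hno rho Hcov Hsat.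
  - destruct ts as [|t ts].
    + simpl. split; auto.
    + exfalso. destruct t as [y|k].
      * simpl in Hcov. exact (Hcov y (or_introl eq_refl) (or_introl eq_refl)).
      * specialize (Hno (Cst k) (or_introl eq_refl)). discriminate.
  - exact Hsat.
  - exact Hsat.
  - destruct Hq, Hno, Hsat. split.
    + apply IHM1; auto. intros x Hx. apply (Hcov x (in_or_app _ _ _ (or_introl Hx))).
    + apply IHM2; auto. intros x Hx. apply (Hcov x (in_or_app _ _ _ (or_intror Hx))).
  - destruct Hq, Hno. destruct Hsat as [Hs|Hs]; [left|right].
    + apply IHM1; auto. intros x Hx. apply (Hcov x (in_or_app _ _ _ (or_introl Hx))).
    + apply IHM2; auto. intros x Hx. apply (Hcov x (in_or_app _ _ _ (or_intror Hx))).
  - destruct Hq as [Hq1 Hq2], Hno as [Hn1 Hn2]. split.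
    + intros HG.
      destruct (classic (exists x, In x (fv M1 ++ fv M2) /\ inRV x M1)) as [[x [Hx Hr]]|Hn].
      * exfalso. exact (rv_false c P M1 Hq1 Hn1 x rho Hr HG).
      * apply IHM2; auto.
        -- intros x Hx. destruct (Hcov x (in_or_app _ _ _ (or_intror Hx))) as [Hr|Hc];
             [exfalso; apply Hn; exists x; split; [apply in_or_app; right; exact Hx| exact Hr] | exact Hc].
        -- apply Hsat. eapply star_imp; [|exact HG]. intros s l [_ H]; exact H.
    + intros HG. apply (proj2 (sat_fmap_inl c P (Uz P) M2 rho)).
      apply Hsat. apply (proj1 (sat_fmap_inl c P (Uz P) M1 rho)). exact HG.
  - contradiction.
  - contradiction.
Qed.

Lemma no_obj_prenex qs M : no_obj_consts (prenex qs M) -> no_obj_consts M.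
Proof. induction qs as [|[[] x] qs IH]; simpl; auto. Qed.

Lemma prenex_main {D} (c : nat -> D) P M (Hq : qfree M) (Hno : no_obj_consts M) :
  forall qs rho, (forall x, In x (map snd qs) -> covered x M) ->
  (forall y, In y (fv (prenex qs M)) -> covered y M) ->
  sat c P rho (prenex qs M) ->
  sat c (sum_interp P (Uz P)) rho (star (prenex qs M)).
Proof.
  induction qs as [|[b x] qs IH]; simpl; intros rho Hc Hfv Hsat.
  - apply qf_main; auto.
  - destruct b; simpl in *.
    + intros d. apply IH; auto.
      intros y Hy. destruct (Nat.eq_dec y x) as [->|Hne]; [apply Hc; left; reflexivity|].
      apply Hfv. apply in_in_remove; auto.
    + destruct Hsat as [d Hd]. exists d. apply IH; auto.
      intros y Hy. destruct (Nat.eq_dec y x) as [->|Hne]; [apply Hc; left; reflexivity|].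
      apply Hfv. apply in_in_remove; auto.
Qed.

Lemma forall_list_intro {S D} (c : nat -> D) (P : S -> list D -> Prop) :
  forall xs G rho, (forall rho', sat c P rho' G) -> sat c P rho (forall_list xs G).
Proof. induction xs; simpl; auto. Qed.

Theorem corollary1 :
  forall F : form psym,
    wf F -> semi_safe F -> no_obj_consts F ->
    forall p : psym, In p (preds F) -> 0 < arity p ->
    forall xs : list nat, NoDup xs -> length xs = arity p ->
      SM_entails F (forall_list xs (Neg (Atom p (map Var xs)))).
Proof.
  intros F Hwf [Hsent [qs [M [HF [Hqf [_ Hcov]]]]]] Hno p Hp Har xs Hnd Hlen
    D _ c P rho [Hsat Hmin].
  apply forall_list_intro. intros rho' HP. simpl in HP.
  apply Hmin. exists (Uz P). split; [split|].
  - intros q _ l _ [_ H]; exact H.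
  - intros Heq.
    assert (Hl : length (map (tval c rho') (map Var xs)) = arity p)
      by (rewrite !length_map; assumption).
    destruct (Heq p Hp _ Hl) as [_ H1].
    destruct (H1 HP) as [Hnil _].
    apply (f_equal (@length D)) in Hnil. rewrite !length_map in Hnil. simpl in Hnil. lia.
  - subst F. apply prenex_main; auto.
    + eapply no_obj_prenex; eauto.
    + unfold sentence in Hsent. rewrite Hsent. intros y [].
Qed.
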